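(* Let $V$ be a finite set of $N \ge 2$ nodes, and let $G_X=(V,E_X)$ and $G_Y=(V,E_Y)$ be connected undirected graphs on $V$ with positive edge weights, with graph Laplacians $L_X$ and $L_Y$ respectively. Let $L_X^+$ and $L_Y^+$ denote their Moore–Penrose pseudoinverses. For distinct $p,q\in V$ let $e_{p,q}=e_p-e_q$, where $e_p\in\mathbb{R}^N$ is the $p$-th standard basis vector, and define the distance mapping distortion $$\gamma^F(p,q)=\frac{e_{p,q}^\top L_Y^+ e_{p,q}}{e_{p,q}^\top L_X^+ e_{p,q}},\qquad \gamma^F_{\min}=\min_{p,q\in V,\;p\neq q}\gamma^F(p,q).$$ Then $$\gamma^F_{\min}\;\ge\;\frac{1}{\lambda_{\max}\bigl(L_X^+ L_Y\bigr)},$$ where $\lambda_{\max}(\cdot)$ denotes the largest eigenvalue.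
   Context: For a weighted undirected graph with (symmetric, nonnegative) weight matrix $W$ and diagonal degree matrix $D$ (with $D_{pp}=\sum_q W_{pq}$), the Laplacian is $L=D-W$. The quantity $e_{p,q}^\top L^+ e_{p,q}$ is the effective-resistance distance between nodes $p$ and $q$. Here $G_X$ and $G_Y$ play the roles of an input manifold graph and an output manifold graph on the same node set (the same samples), and $\gamma^F(p,q)$ is the ratio of output to input effective-resistance distance. *)

(* Defs.v *)
From mathcomp Require Import all_boot all_order all_algebra.
From mathcomp Require Import reals.
Set Implicit Arguments. Unset Strict Implicit. Unset Printing Implicit Defensive.
Import Order.TTheory GRing.Theory Num.Theory.
Local Open Scope ring_scope.

Section Defs.
Variable R : realType.
Variable N : nat.

(* weighted undirected graph on 'I_N given by its weight matrix:
   symmetric, nonnegative, W p q > 0 iff {p,q} is an edge (positive weight) *)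
Definition weight_matrix (W : 'M[R]_N) : Prop :=
  (forall p q, W p q = W q p) /\ (forall p q, 0 <= W p q).

Definition connected_graph (W : 'M[R]_N) : Prop :=
  forall p q : 'I_N, connect (fun a b => 0 < W a b) p q.

Definition degree_mx (W : 'M[R]_N) : 'M[R]_N :=
  diag_mx (\row_p \sum_q W p q).
Definition laplacian (W : 'M[R]_N) : 'M[R]_N := degree_mx W - W.

(* B is the Moore-Penrose pseudoinverse of A (real case: conjugate transpose = transpose) *)
Definition MP_pinv (A B : 'M[R]_N) : Prop :=
  [/\ A *m B *m A = A, B *m A *m B = B,
      (A *m B)^T = A *m B & (B *m A)^T = B *m A].

Definition epq (p q : 'I_N) : 'cV[R]_N := delta_mx p 0 - delta_mx q 0.

Definition qform (A : 'M[R]_N) (x : 'cV[R]_N) : R := (x^T *m A *m x) 0 0.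

Definition gammaF (LXp LYp : 'M[R]_N) (p q : 'I_N) : R :=
  qform LYp (epq p q) / qform LXp (epq p q).

Definition is_lambda_max (A : 'M[R]_N) (lam : R) : Prop :=
  eigenvalue A lam /\ (forall mu, eigenvalue A mu -> mu <= lam).

End Defs.

(* Main.v *)
Require Import Defs.
From mathcomp Require Import all_boot all_order all_algebra.
From mathcomp Require Import reals.
From mathcomp Require Import all_classical all_reals all_analysis.
From mathcomp Require Import ring lra.
Set Implicit Arguments. Unset Strict Implicit. Unset Printing Implicit Defensive.
Import Order.TTheory GRing.Theory Num.Theory.
Import numFieldNormedType.Exports.
Local Open Scope classical_set_scope.
Local Open Scope ring_scope.

Definition bf (R : realType) n (M : 'M[R]_n) (x y : 'cV[R]_n) : R :=
  (x^T *m M *m y) 0 0.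

Lemma qformE (R : realType) n (M : 'M[R]_n) x : qform M x = bf M x x.
Proof. by []. Qed.

Lemma bf_tr (R : realType) n (M : 'M[R]_n) x y : bf M x y = bf M^T y x.
Proof.
rewrite /bf -[in LHS](trmxK (x^T *m M *m y)) [in LHS]mxE.
by rewrite !trmx_mul trmxK mulmxA.
Qed.

Lemma bf_sum (R : realType) n (M : 'M[R]_n) x y :
  bf M x y = \sum_i \sum_j x i 0 * M i j * y j 0.
Proof.
rewrite /bf mxE; under eq_bigr do rewrite mxE big_distrl /=.
rewrite exchange_big /=; apply: eq_bigr => i _; apply: eq_bigr => j _.
by rewrite mxE.
Qed.

Lemma bfDl (R : realType) n (M : 'M[R]_n) x y z : bf M (x + y) z = bf M x z + bf M y z.
Proof. by rewrite /bf linearD /= !mulmxDl mxE. Qed.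
Lemma bfDr (R : realType) n (M : 'M[R]_n) x y z : bf M z (x + y) = bf M z x + bf M z y.
Proof. by rewrite /bf mulmxDr mxE. Qed.
Lemma bfZl (R : realType) n (M : 'M[R]_n) a x z : bf M (a *: x) z = a * bf M x z.
Proof. by rewrite /bf linearZ /= -!scalemxAl mxE. Qed.
Lemma bfZr (R : realType) n (M : 'M[R]_n) a x z : bf M z (a *: x) = a * bf M z x.
Proof. by rewrite /bf -!scalemxAr mxE. Qed.
Lemma bfMB (R : realType) n (M M' : 'M[R]_n) a x z :
  bf (M - a *: M') x z = bf M x z - a * bf M' x z.
Proof. by rewrite /bf mulmxBr mulmxBl -scalemxAr -scalemxAl !mxE. Qed.
Lemma bf_mul (R : realType) n (M : 'M[R]_n) x z : bf M x z = bf 1%:M x (M *m z).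
Proof. by rewrite /bf mulmx1 mulmxA. Qed.
Lemma bf_mulr (R : realType) n (M : 'M[R]_n) x z : bf M x z = bf 1%:M (M^T *m x) z.
Proof. by rewrite /bf mulmx1 trmx_mul trmxK. Qed.
Lemma bf1 (R : realType) n (x z : 'cV[R]_n) : bf 1%:M x z = \sum_i x i 0 * z i 0.
Proof. by rewrite /bf mulmx1 mxE; apply: eq_bigr => i _; rewrite mxE. Qed.

Lemma bf1_eq0 (R : realType) n (x : 'cV[R]_n) : bf 1%:M x x = 0 -> x = 0.
Proof.
rewrite bf1 => /eqP; rewrite psumr_eq0; last by move=> i _; rewrite -expr2 sqr_ge0.
move=> /allP H; apply/matrixP => i j; rewrite (ord1 j) mxE.
by have /(_ (mem_index_enum i)) := H i; rewrite -expr2 sqrf_eq0 => /eqP.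
Qed.

Lemma lapE (R : realType) n (W : 'M[R]_n) i j :
  laplacian W i j = (\sum_k W i k) *+ (i == j) - W i j.
Proof. by rewrite /laplacian /degree_mx !mxE. Qed.

Lemma lap_tr (R : realType) n (W : 'M[R]_n) : weight_matrix W ->
  (laplacian W)^T = laplacian W.
Proof.
move=> [sW _]; apply/matrixP => i j; rewrite mxE !lapE sW eq_sym.
by case: eqVneq => [->|].
Qed.

Lemma lap_ones (R : realType) n (W : 'M[R]_n) :
  laplacian W *m (const_mx 1 : 'cV[R]_n) = 0.
Proof.
apply/matrixP => i j; rewrite !mxE.
under eq_bigr do rewrite lapE mxE mulr1.
rewrite sumrB (bigD1 i) //= eqxx mulr1n.
rewrite [X in _ + X - _]big1 ?addr0 ?subrr //.
by move=> k /negbTE; rewrite eq_sym => ->.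
Qed.

Lemma lap_qform (R : realType) n (W : 'M[R]_n) y : weight_matrix W ->
  2 * qform (laplacian W) y = \sum_i \sum_j W i j * (y i 0 - y j 0) ^+ 2.
Proof.
move=> [sW _].
have E1 : qform (laplacian W) y = \sum_i \sum_j W i j * (y i 0 ^+ 2 - y i 0 * y j 0).
  rewrite qformE bf_sum; apply: eq_bigr => i _.
  under eq_bigr do rewrite lapE mulrBr mulrBl.
  rewrite sumrB (bigD1 i) //= eqxx mulr1n.
  rewrite [X in _ + X - _]big1 ?addr0; last first.
    by move=> k; rewrite eq_sym => /negbTE ->; rewrite mulr0n mulr0 mul0r.
  under [X in _ = X]eq_bigr do rewrite mulrBr.
  rewrite sumrB big_distrr big_distrl /=; congr (_ - _).
    by apply: eq_bigr => k _; rewrite expr2; ring.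
  by apply: eq_bigr => k _; ring.
have E2 : \sum_i \sum_j W i j * y j 0 ^+ 2 = \sum_i \sum_j W i j * y i 0 ^+ 2.
  by rewrite exchange_big /=; apply: eq_bigr => i _; apply: eq_bigr => j _; rewrite sW.
rewrite E1 mulr_sumr.
have split3 (F G H : 'I_n -> 'I_n -> R) :
  \sum_i \sum_j (F i j + G i j - H i j) =
  \sum_i \sum_j F i j + \sum_i \sum_j G i j - \sum_i \sum_j H i j.
  rewrite -big_split -sumrB /=; apply: eq_bigr => i _.
  by rewrite -big_split -sumrB.
transitivity (\sum_i \sum_j (W i j * y i 0 ^+ 2 + W i j * y i 0 ^+ 2 - 2 * (W i j * y i 0 * y j 0))).
  by apply: eq_bigr => i _; rewrite mulr_sumr; apply: eq_bigr => j _; ring.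
transitivity (\sum_i \sum_j (W i j * y i 0 ^+ 2 + W i j * y j 0 ^+ 2 - 2 * (W i j * y i 0 * y j 0))).
  by rewrite !split3 E2.
by apply: eq_bigr => i _; apply: eq_bigr => j _; ring.
Qed.

Lemma lap_psd (R : realType) n (W : 'M[R]_n) y : weight_matrix W ->
  0 <= qform (laplacian W) y.
Proof.
move=> hW; have := lap_qform y hW; have [_ pW] := hW.
have : 0 <= \sum_i \sum_j W i j * (y i 0 - y j 0) ^+ 2.
  by apply: sumr_ge0 => i _; apply: sumr_ge0 => j _; rewrite mulr_ge0 ?sqr_ge0.
move=> h1 h2; rewrite -h2 in h1; rewrite -(pmulr_rge0 _ (ltr0Sn _ 1)); exact: h1.
Qed.

Lemma lap_ker (R : realType) n (W : 'M[R]_n) (z : 'cV[R]_n) : weight_matrix W -> connected_graph W ->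
  laplacian W *m z = 0 -> forall i j, z i 0 = z j 0.
Proof.
move=> hW cW Lz.
have q0 : qform (laplacian W) z = 0 by rewrite /qform -mulmxA Lz mulmx0 mxE.
have := lap_qform z hW; rewrite q0 mulr0 => /esym/eqP.
have [_ pW] := hW.
rewrite psumr_eq0; last by move=> i _; apply: sumr_ge0 => j _; rewrite mulr_ge0 ?sqr_ge0.
move=> /allP H.
have edge a b : 0 < W a b -> z a 0 = z b 0.
  move=> wab; have := H a (mem_index_enum a); rewrite implyTb.
  rewrite psumr_eq0; last by move=> j _; rewrite mulr_ge0 ?sqr_ge0.
  move=> /allP /(_ b (mem_index_enum b)); rewrite mulf_eq0 gt_eqF //= sqrf_eq0 subr_eq0.
  by move/eqP.
move=> i j; have /connectP [p pth ->] := cW i j.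
elim: p i pth => [|a p IH] i //= /andP [ia pth].
by rewrite (edge _ _ ia); apply: IH.
Qed.

Definition onev (R : realType) n : 'cV[R]_n := const_mx 1.

Lemma bf_comb (R : realType) n (M : 'M[R]_n) (sM : M^T = M) a b u w :
  bf M (a *: u + b *: w) (a *: u + b *: w) =
  a ^+ 2 * bf M u u + 2 * a * b * bf M u w + b ^+ 2 * bf M w w.
Proof. rewrite !bfDl !bfDr !bfZl !bfZr (bf_tr M w u) sM; ring. Qed.

Lemma cs (R : realType) n (M : 'M[R]_n) (sM : M^T = M)
  (pM : forall y, 0 <= bf M y y) u w :
  bf M u w ^+ 2 <= bf M u u * bf M w w.
Proof.
set a := bf M u u; set b := bf M u w; set c := bf M w w.
have a0 : 0 <= a by apply: pM.
have c0 : 0 <= c by apply: pM.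
have [->|b0] := eqVneq b 0; first by rewrite expr0n /= mulr_ge0.
have [cz|cp] := eqVneq c 0.
  have := pM (1 *: u + (- ((a + 1) / b)) *: w); rewrite bf_comb // -/a -/b -/c cz.
  have -> : 2 * 1 * - ((a + 1) / b) * b = - 2 * (a + 1) by field.
  lra.
have cgt : 0 < c by rewrite lt_def cp c0.
have := pM (c *: u + (- b) *: w); rewrite bf_comb // -/a -/b -/c.
have -> : c ^+ 2 * a + 2 * c * - b * b + (- b) ^+ 2 * c = c * (c * a - b ^+ 2) by ring.
by rewrite pmulr_rge0 // subr_ge0 mulrC.
Qed.

Lemma psd_zero (R : realType) n (M : 'M[R]_n) (sM : M^T = M)
  (pM : forall y, 0 <= bf M y y) u : bf M u u = 0 -> M *m u = 0.
Proof.
move=> h; have := cs sM pM u (M *m u); rewrite h mul0r.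
have -> : bf M u (M *m u) = bf 1%:M (M *m u) (M *m u) by rewrite bf_mulr sM /bf mulmxA.
move=> h2; apply: bf1_eq0; apply/eqP; rewrite -sqrf_eq0 eq_le h2 sqr_ge0 //.
Qed.

Lemma onev_mul (R : realType) n (x : 'cV[R]_n) i : ((onev R n)^T *m x) i 0 = \sum_j x j 0.
Proof. by rewrite mxE; apply: eq_bigr => j _; rewrite !mxE mul1r. Qed.

Lemma const_zero (R : realType) n (z : 'cV[R]_n) :
  (forall i j, z i 0 = z j 0) -> (onev R n)^T *m z = 0 -> z = 0.
Proof.
move=> cz oz; apply/matrixP => i j; rewrite (ord1 j) mxE.
have := onev_mul z 0; rewrite oz mxE.
under eq_bigr do rewrite (cz _ i).
rewrite sumr_const card_ord => /esym/eqP; rewrite mulrn_eq0 => /orP [|/eqP //].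
by move=> /eqP n0; have := ltn_ord i; rewrite {2}n0.
Qed.

Lemma lap_onesT (R : realType) n (W : 'M[R]_n) : weight_matrix W ->
  (onev R n)^T *m laplacian W = 0.
Proof.
by move=> hW; rewrite -(trmxK (_ *m _)) trmx_mul trmxK lap_tr // lap_ones trmx0.
Qed.

Lemma mp_props (R : realType) n (W : 'M[R]_n) (P : 'M[R]_n) :
  weight_matrix W -> connected_graph W -> MP_pinv (laplacian W) P ->
  [/\ forall x : 'cV[R]_n, (onev R n)^T *m x = 0 -> laplacian W *m (P *m x) = x,
      forall y : 'cV[R]_n, (onev R n)^T *m y = 0 -> P *m (laplacian W *m y) = y &
      forall x : 'cV[R]_n, (onev R n)^T *m (P *m x) = 0].
Proof.
move=> hW cW [h1 h2 h3 h4]; set L := laplacian W in h1 h2 h3 h4 *.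
have sL : L^T = L by apply: lap_tr.
have oL : (onev R n)^T *m L = 0 by apply: lap_onesT.
have oPL : (onev R n)^T *m (P *m L) = 0.
  by rewrite -(trmxK (_ *m _)) trmx_mul trmxK h4 -mulmxA lap_ones mulmx0 trmx0.
have oP : forall x : 'cV[R]_n, (onev R n)^T *m (P *m x) = 0.
  by move=> x; rewrite -h2 -!mulmxA (mulmxA P L) mulmxA oPL mul0mx.
split => //.
- move=> x ox; set z := x - L *m (P *m x).
  have zL : z^T *m L = 0.
    by rewrite /z [(x - _)^T]linearB /= mulmxBl (mulmxA L P x) trmx_mul h3 -mulmxA h1 subrr.
  have Lz : L *m z = 0 by rewrite -[L *m z]trmxK trmx_mul sL zL trmx0.
  apply/eqP; rewrite eq_sym -subr_eq0; apply/eqP; apply: const_zero.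
    exact: lap_ker hW cW Lz.
  by rewrite mulmxBr ox (mulmxA _ L) oL mul0mx subrr.
- move=> y oy; set z := y - P *m (L *m y).
  have Lz : L *m z = 0 by rewrite /z mulmxBr !mulmxA h1 subrr.
  apply/eqP; rewrite eq_sym -subr_eq0; apply/eqP; apply: const_zero.
    exact: lap_ker hW cW Lz.
  by rewrite mulmxBr oy oP subrr.
Qed.

Lemma posdef (R : realType) n (W : 'M[R]_n) y :
  weight_matrix W -> connected_graph W ->
  (onev R n)^T *m y = 0 -> y != 0 -> 0 < qform (laplacian W) y.
Proof.
move=> hW cW oy y0; rewrite lt_def lap_psd // andbT.
apply/eqP => q0; move/eqP: y0; apply.
have Ly : laplacian W *m y = 0.
  apply: psd_zero q0; first exact: lap_tr.
  by move=> v; apply: lap_psd.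
by apply: const_zero oy; apply: lap_ker Ly.
Qed.

Lemma eig_col (R : realType) n (M : 'M[R]_n) (y : 'cV[R]_n) mu :
  y != 0 -> M *m y = mu *: y -> eigenvalue M mu.
Proof.
move=> y0 My; rewrite /eigenvalue /eigenspace; apply/negP => /eqP k0.
have : (M - mu%:M)^T \in unitmx.
  by rewrite unitmx_tr -row_free_unit -kermx_eq0 k0.
rewrite unitmx_tr => u.
have h : (M - mu%:M) *m y = 0 by rewrite mulmxBl My mul_scalar_mx subrr.
move/eqP: y0; apply; by rewrite -(mulKmx u y) h mulmx0.
Qed.

Definition gq (R : realType) n (M : 'M[R]_n) (v : 'rV[R]_n) : R :=
  \sum_i \sum_j v 0 i * M i j * v 0 j.

Lemma gqE (R : realType) n (M : 'M[R]_n) v : gq M v = qform M v^T.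
Proof.
rewrite qformE bf_sum; apply: eq_bigr => i _; apply: eq_bigr => j _.
by rewrite !mxE.
Qed.

Lemma gq_cont (R : realType) n (M : 'M[R]_n) : continuous (gq M).
Proof.
rewrite /gq; apply: continuous_big => //; first exact: add_continuous.
move=> i _; apply: continuous_big => //; first exact: add_continuous.
move=> j _ x.
apply: (continuousM (s := fun v : 'rV[R]_n => v 0 i * M i j) (t := fun v : 'rV[R]_n => v 0 j)); last exact: coord_continuous.
apply: (continuousM (s := fun v : 'rV[R]_n => v 0 i) (t := fun v : 'rV[R]_n => M i j)); last exact: cst_continuous.
exact: coord_continuous.
Qed.

Lemma sum_cont (R : realType) n : continuous (fun v : 'rV[R]_n => \sum_i v 0 i).
Proof.
apply: continuous_big => //; first exact: add_continuous.
move=> i _; exact: coord_continuous.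
Qed.

Lemma orth_row (R : realType) n (v : 'rV[R]_n) :
  ((onev R n)^T *m v^T = 0) <-> (\sum_i v 0 i = 0).
Proof.
split.
  move=> h; have := onev_mul v^T 0; rewrite h mxE => /esym.
  by under eq_bigr do rewrite mxE.
move=> h; apply/matrixP => i j; rewrite (ord1 i) (ord1 j) onev_mul mxE.
by under eq_bigr do rewrite mxE.
Qed.

Lemma qformZ (R : realType) n (M : 'M[R]_n) k y : qform M (k *: y) = k ^+ 2 * qform M y.
Proof. by rewrite !qformE bfZl bfZr mulrA expr2. Qed.

Lemma qform0 (R : realType) n (M : 'M[R]_n) : qform M 0 = 0.
Proof. by rewrite /qform trmx0 !mul0mx mxE. Qed.

Lemma S_compact (R : realType) n :
  compact [set v : 'rV[R]_n | `|v| = 1 /\ \sum_i v 0 i = 0].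
Proof.
apply: bounded_closed_compact.
  rewrite /= /bounded_near; near=> M => v [nv _] /=; rewrite nv.
  near: M; exact: nbhs_pinfty_ge.
have -> : [set v : 'rV[R]_n | `|v| = 1 /\ \sum_i v 0 i = 0] =
   ((@Num.norm _ _ : 'rV[R]_n -> R) @^-1` [set x | x = 1]) `&` ((fun v : 'rV[R]_n => \sum_i v 0 i) @^-1` [set x | x = 0]).
  by [].
apply: closedI; apply: preimage_closed; try exact: closed_eq.
  by move=> x _; apply: norm_continuous.
by move=> x _; apply: sum_cont.
Unshelve. all: by end_near.
Qed.

Lemma rayleigh (R : realType) n (WX WY P : 'M[R]_n) lam :
  weight_matrix WX -> connected_graph WX -> weight_matrix WY ->
  MP_pinv (laplacian WX) P -> is_lambda_max (P *m laplacian WY) lam ->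
  forall y0 : 'cV[R]_n, (onev R n)^T *m y0 = 0 -> y0 != 0 ->
  forall y : 'cV[R]_n, (onev R n)^T *m y = 0 ->
  qform (laplacian WY) y <= lam * qform (laplacian WX) y.
Proof.
move=> hX cX hY hP [_ lmax] y0 oy0 y00.
have [_ PL _] := mp_props hX cX hP.
pose S := [set v : 'rV[R]_n | `|v| = 1 /\ \sum_i v 0 i = 0].
pose f := fun v => gq (laplacian WY) v / gq (laplacian WX) v.
have Apos : forall v, S v -> 0 < gq (laplacian WX) v.
  move=> v [nv sv]; rewrite gqE; apply: posdef => //; first exact/orth_row.
  apply/eqP => vt; move: nv; rewrite -[v]trmxK vt trmx0 normr0 => /eqP.
  by rewrite eq_sym oner_eq0.
have scale : forall y : 'cV[R]_n, (onev R n)^T *m y = 0 -> y != 0 ->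
    S (`|y^T|^-1 *: y^T).
  move=> y oy yn0.
  have yt0 : y^T != 0 by apply: contra yn0 => /eqP yt; rewrite -[y]trmxK yt trmx0.
  split.
    rewrite normrZ ger0_norm ?invr_ge0 ?normr_ge0 // mulVf //.
    by rewrite normr_eq0.
  under eq_bigr do rewrite mxE.
  rewrite -mulr_sumr; move: (oy); rewrite -[y in _ *m y]trmxK => /orth_row ->.
  by rewrite mulr0.
have Sne : S !=set0 by exists (`|y0^T|^-1 *: y0^T); apply: scale.
have fcont : {within S, continuous f}.
  apply: continuous_in_subspaceT => v /set_mem Sv.
  apply: (continuousM (s := gq (laplacian WY)) (t := fun v => (gq (laplacian WX) v)^-1)).
    exact: gq_cont.
  apply: continuousV; first by rewrite gt_eqF // Apos.
  exact: gq_cont.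
have [c /set_mem Sc cmax] := EVT_max_rV Sne (@S_compact R n) fcont.
set mu := f c.
have claim1 : forall y : 'cV[R]_n, (onev R n)^T *m y = 0 ->
    qform (laplacian WY) y <= mu * qform (laplacian WX) y.
  move=> y oy; have [->|yn0] := eqVneq y 0; first by rewrite !qform0 mulr0.
  have := cmax _ (mem_set (scale y oy yn0)); rewrite -/mu.
  rewrite /f !gqE linearZ /= trmxK !qformZ.
  have qp : 0 < qform (laplacian WX) y by apply: posdef.
  have k0 : `|y^T|^-1 != 0.
    rewrite invr_eq0 normr_eq0; apply: contra yn0 => /eqP yt.
    by rewrite -[y]trmxK yt trmx0.
  have -> : `|y^T|^-1 ^+ 2 * qform (laplacian WY) y / (`|y^T|^-1 ^+ 2 * qform (laplacian WX) y)
     = qform (laplacian WY) y / qform (laplacian WX) y.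
    by field; rewrite gt_eqF //= -invr_eq0.
  by rewrite ler_pdivrMr.
have [nc sc] := Sc.
have oys : (onev R n)^T *m c^T = 0 by apply/orth_row.
have ys0 : c^T != 0.
  apply/eqP => vt; move: nc; rewrite -[c]trmxK vt trmx0 normr0 => /eqP.
  by rewrite eq_sym oner_eq0.
have qAp : 0 < qform (laplacian WX) c^T by rewrite -gqE; apply: Apos.
pose C := laplacian WY - mu *: laplacian WX.
have sC : C^T = C.
  have t1 := lap_tr hY; have t2 := lap_tr hX.
  apply/matrixP => i j; move/matrixP: t1 => /(_ i j); move/matrixP: t2 => /(_ i j).
  by rewrite !mxE => -> ->.
have qC0 : bf C c^T c^T = 0.
  rewrite bfMB -!qformE /mu /f !gqE; field; exact: lt0r_neq0.
have qCle : forall y : 'cV[R]_n, (onev R n)^T *m y = 0 -> bf C y y <= 0.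
  by move=> y oy; rewrite bfMB -!qformE subr_le0 claim1.
pose z := C *m c^T.
have oz : (onev R n)^T *m z = 0.
  rewrite /z /C mulmxA mulmxBr -scalemxAr !lap_onesT // scaler0 subr0 mul0mx //.
have z0 : z = 0.
  have s0 : 0 <= bf 1%:M z z.
    by rewrite bf1 sumr_ge0 // => i _; rewrite -expr2 sqr_ge0.
  have cz : bf C z z <= 0 := qCle z oz.
  have bCz : bf C c^T z = bf 1%:M z z by rewrite bf_tr sC bf_mul.
  have key : forall t, 0 < t -> 2 * t * bf 1%:M z z + t ^+ 2 * bf C z z <= 0.
    move=> t t0.
    have oyz : (onev R n)^T *m (1 *: c^T + t *: z) = 0.
      by rewrite mulmxDr -!scalemxAr oys oz !scaler0 addr0.
    have := qCle _ oyz; rewrite bf_comb // qC0 bCz.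
    by rewrite expr1n mulr0 add0r mulr1.
  apply: bf1_eq0; apply/eqP; rewrite eq_le s0 andbT.
  rewrite leNgt; apply/negP => sp.
  set s := bf 1%:M z z in s0 bCz key sp *; set cc := bf C z z in cz key *.
  have d0 : 0 < 1 - cc by lra.
  have tp : 0 < s / (1 - cc) by rewrite divr_gt0.
  have := key _ tp.
  have -> : 2 * (s / (1 - cc)) * s + (s / (1 - cc)) ^+ 2 * cc =
      (s / (1 - cc)) * (s + s / (1 - cc)).
    by field; rewrite gt_eqF.
  rewrite pmulr_rle0 // => h.
  have : 0 < s / (1 - cc) by [].
  lra.
have Bys : laplacian WY *m c^T = mu *: (laplacian WX *m c^T).
  apply/eqP; rewrite -subr_eq0; apply/eqP.
  by move: z0; rewrite /z /C mulmxBl -scalemxAl.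
have eig : (P *m laplacian WY) *m c^T = mu *: c^T.
  by rewrite -mulmxA Bys -scalemxAr PL.
have mul := lmax mu (eig_col ys0 eig).
move=> y oy; apply: le_trans (claim1 y oy) _.
by apply: ler_wpM2r => //; apply: lap_psd.
Qed.

Lemma sum_delta (R : realType) n (p : 'I_n) :
  \sum_j (delta_mx p 0 : 'cV[R]_n) j 0 = 1.
Proof.
rewrite (bigD1 p) //= mxE !eqxx /= big1 ?addr0 //.
by move=> j /negbTE jp; rewrite mxE jp.
Qed.

Theorem theorem3 (R : realType) (N : nat) (HN : (2 <= N)%N)
  (WX WY : 'M[R]_N)
  (hWX : weight_matrix WX) (hWY : weight_matrix WY)
  (cX : connected_graph WX) (cY : connected_graph WY)
  (LXp LYp : 'M[R]_N)
  (hXp : MP_pinv (laplacian WX) LXp) (hYp : MP_pinv (laplacian WY) LYp)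
  (lam : R) (hlam : is_lambda_max (LXp *m laplacian WY) lam) :
  forall p q : 'I_N, p != q -> 1 / lam <= gammaF LXp LYp p q.
Proof.
move=> p q pq.
have ox : (onev R N)^T *m (@epq R N p q) = 0.
  apply/matrixP => i0 j0; rewrite (ord1 i0) (ord1 j0) onev_mul mxE.
  transitivity (\sum_j (delta_mx p 0 : 'cV[R]_N) j 0 - \sum_j (delta_mx q 0 : 'cV[R]_N) j 0).
    by rewrite -sumrB; apply: eq_bigr => j _; rewrite !mxE.
  by rewrite !sum_delta subrr.
have x0 : (@epq R N p q) != 0.
  apply/eqP => /matrixP /(_ p 0); rewrite !mxE !eqxx (negbTE pq) /=.
  by rewrite subr0 => /eqP; rewrite oner_eq0.
have [PLX _ oPX] := mp_props hWX cX hXp.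
have [PLY _ oPY] := mp_props hWY cY hYp.
set x := (@epq R N p q) in ox x0 *.
set u := LXp *m x; set w := LYp *m x.
have Au : laplacian WX *m u = x by apply: PLX.
have Bw : laplacian WY *m w = x by apply: PLY.
have qPx : qform LXp x = bf 1%:M x u by rewrite qformE bf_mul.
have qQx : qform LYp x = bf 1%:M x w by rewrite qformE bf_mul.
have qAu : qform (laplacian WX) u = bf 1%:M x u.
  by rewrite qformE bf_mulr lap_tr // Au.
have qBw : qform (laplacian WY) w = bf 1%:M x w.
  by rewrite qformE bf_mulr lap_tr // Bw.
have bBuw : bf (laplacian WY) u w = bf 1%:M x u.
  by rewrite bf_mul Bw bf_tr trmx1.
have hcs := cs (lap_tr hWY) (fun y => lap_psd y hWY) u w.
have hr := rayleigh hWX cX hWY hXp hlam ox x0 (oPX x).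
have u0 : u != 0.
  by apply: contra x0 => /eqP u0; rewrite -Au u0 mulmx0.
have ap := posdef hWX cX (oPX x) u0.
have bp := lap_psd w hWY.
rewrite /gammaF -/x qPx qQx -qAu -qBw.
move: hcs; rewrite -!qformE bBuw -qAu.
set a := qform (laplacian WX) u in ap hr *.
set b := qform (laplacian WY) w in bp *.
set c := qform (laplacian WY) u in hr *.
move=> hcs.
have hab : a * a <= a * (lam * b).
  rewrite -expr2; apply: le_trans hcs _; rewrite mulrA.
  by apply: ler_wpM2r => //; rewrite mulrC.
have hab' : a <= lam * b by rewrite -(ler_pM2l ap).
have lp : 0 < lam.
  rewrite ltNge; apply/negP => l0.
  have : lam * b <= 0 by rewrite mulr_le0_ge0.
  lra.
have b0 : 0 < b.
  rewrite ltNge; apply/negP => bb.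
  have : b = 0 by apply/eqP; rewrite eq_le bb bp.
  move=> bz; rewrite bz mulr0 in hab'; by rewrite ltNge hab' in ap.
rewrite -subr_ge0.
have -> : b / a - 1 / lam = (lam * b - a) / (lam * a).
  by field; rewrite !gt_eqF.
by rewrite divr_ge0 ?subr_ge0 // mulr_ge0 // ltW.
Qed.
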